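(* Let $\mathscr X\in\mathbb R^{I_1\times\cdots\times I_N}$ be a nonzero tensor, fix $n$ with $1\leq n\leq N$, and set $R=\operatorname{rank}(\mathbf X_{(n)})$. Let $j_1<\cdots<j_R$ be the indices of $R$ linearly independent rows of $\mathbf X_{(n)}$, and define $\mathbf A\in\mathbb R^{R\times I_n}$ by $a_{st}=1$ if $t=j_s$ and $a_{st}=0$ otherwise. Set $\mathscr Y=\mathscr X\times_n\mathbf A$. Then $\mathscr Y$ is a subtensor of $\mathscr X$, and $\operatorname{rank}(\mathbf Y_{(m)})=\operatorname{rank}(\mathbf X_{(m)})$ for every $m$ with $1\leq m\leq N$.
   Context: All tensors are real. For $\mathscr X\in\mathbb R^{I_1\times\cdots\times I_N}$, the mode-$n$ unfolding $\mathbf X_{(n)}\in\mathbb R^{I_n\times (\prod_{k\neq n}I_k)}$ is the matrix whose rows are indexed by $i_n$ and whose columns are exactly the vectors $(x_{i_1\cdots i_N})_{i_n=1}^{I_n}$ obtained by fixing all indices other than $i_n$ (in a fixed standard order of the remaining indices). The mode-$n$ product of $\mathscr X$ with $\mathbf A\in\mathbb R^{J\times I_n}$ is the tensor $\mathscr X\times_n\mathbf A\in\mathbb R^{I_1\times\cdots\times I_{n-1}\times J\times I_{n+1}\times\cdots\times I_N}$ with entries $(\mathscr X\times_n\mathbf A)_{i_1\cdots i_{n-1}j i_{n+1}\cdots i_N}=\sum_{i_n=1}^{I_n}x_{i_1\cdots i_N}a_{j i_n}$. A subtensor of $\mathscr X$ is a tensor $\mathscr Y\in\mathbb R^{J_1\times\cdots\times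 J_N}$ with $1\le J_n\le I_n$ of the form $y_{j_1\cdots j_N}=x_{i_{1j_1}\cdots i_{Nj_N}}$ for some indices $1\leq i_{n1}<\cdots<i_{nJ_n}\leq I_n$, $1\le n\le N$. *)

(* Defs.v *)
From HB Require Import structures.
From mathcomp Require Import all_boot all_order all_algebra.
From mathcomp Require Import reals.
Set Implicit Arguments. Unset Strict Implicit. Unset Printing Implicit Defensive.
Import Order.TTheory GRing.Theory Num.Theory.
Local Open Scope ring_scope.

(* Tensors of order N with dimensions I k (mode k = 0..N-1 stands for 1..N). *)
Section Tensors.
Variable K : realType.
Variable N : nat.

Definition idx (I : 'I_N -> nat) := {dffun forall k : 'I_N, 'I_(I k)}.
Definition tensor (I : 'I_N -> nat) := {ffun idx I -> K}.

Definition mk_idx (I : 'I_N -> nat) (v : 'I_N -> nat) (H : forall k, (v k < I k)%N)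
  : idx I := [ffun k => Ordinal (H k)].

Definition upd (I : 'I_N -> nat) (n : 'I_N) (J : nat) : 'I_N -> nat :=
  fun k => if k == n then J else I k.

Lemma upd_n (I : 'I_N -> nat) n J : upd I n J n = J.
Proof. by rewrite /upd eqxx. Qed.

Lemma set_idx_proof (I : 'I_N -> nat) n J (jj : idx (upd I n J)) (i : 'I_(I n)) k :
  ((if k == n then val i else val (jj k)) < I k)%N.
Proof.
case: eqP => [->|/eqP ne]; first exact: ltn_ord.
have h : upd I n J k = I k by rewrite /upd (negbTE ne).
by rewrite -h; exact: ltn_ord.
Qed.

Definition set_idx (I : 'I_N -> nat) n J (jj : idx (upd I n J)) (i : 'I_(I n)) : idx I :=
  mk_idx (set_idx_proof jj i).

Definition modeJ (I : 'I_N -> nat) n J (jj : idx (upd I n J)) : 'I_J :=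
  cast_ord (upd_n I n J) (jj n).

Definition mode_prod (I : 'I_N -> nat) (n : 'I_N) (J : nat) (X : tensor I)
  (A : 'M[K]_(J, I n)) : tensor (upd I n J) :=
  [ffun jj => \sum_(i < I n) X (set_idx jj i) * A (modeJ jj) i].

Definition cols (I : 'I_N -> nat) (n : 'I_N) :=
  {dffun forall k : {k : 'I_N | k != n}, 'I_(I (val k))}.

Lemma merge_proof (I : 'I_N -> nat) n (i : 'I_(I n)) (c : cols I n) k :
  ((if (insub k : option {k0 : 'I_N | k0 != n}) is Some k' then val (c k')
    else val i) < I k)%N.
Proof.
case: insubP => [k' _ <-|]; first exact: ltn_ord.
by move/negPn/eqP->; exact: ltn_ord.
Qed.

Definition merge (I : 'I_N -> nat) n (i : 'I_(I n)) (c : cols I n) : idx I :=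
  mk_idx (merge_proof i c).

(* mode-n unfolding: rows indexed by i_n, columns by the remaining indices
   (in the enumeration order of the finite type cols I n) *)
Definition unfold (I : 'I_N -> nat) (X : tensor I) (n : 'I_N)
  : 'M[K]_(I n, #|{: cols I n}|) :=
  \matrix_(i < I n, c < #|{: cols I n}|) X (merge i (enum_val c)).

Definition subtensor (I J : 'I_N -> nat) (Y : tensor J) (X : tensor I) : Prop :=
  (forall k, 1 <= J k <= I k)%N /\
  exists f : forall k : 'I_N, 'I_(J k) -> 'I_(I k),
    (forall k (a b : 'I_(J k)), (a < b)%N -> (f k a < f k b)%N) /\
    forall jj : idx J, Y jj = X (mk_idx (fun k => ltn_ord (f k (jj k)))).

End Tensors.

(* Main.v *)
Require Import Defs.
From HB Require Import structures.
From mathcomp Require Import all_boot all_order all_algebra.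
From mathcomp Require Import reals.
Import Defs.
Set Implicit Arguments. Unset Strict Implicit. Unset Printing Implicit Defensive.
Import Order.TTheory GRing.Theory Num.Theory.
Local Open Scope ring_scope.

Lemma idx_eq (N : nat) (I : 'I_N -> nat) (a b : idx I) :
  (forall k, (a k : nat) = b k) -> a = b.
Proof. by move=> h; apply/ffunP => k; apply/val_inj; exact: h. Qed.

Lemma merge_n (N : nat) (I : 'I_N -> nat) m (i : 'I_(I m)) (c : cols I m) :
  (merge i c m : nat) = i.
Proof. by rewrite /merge /mk_idx ffunE /= insubF // eqxx. Qed.

Lemma merge_off (N : nat) (I : 'I_N -> nat) m (i : 'I_(I m)) (c : cols I m) k' :
  (merge i c (val k') : nat) = c k'.
Proof. by rewrite /merge /mk_idx ffunE /= valK. Qed.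

Lemma merge_offk (N : nat) (I : 'I_N -> nat) m (i : 'I_(I m)) (c : cols I m) k
  (h : k != m) : (merge i c k : nat) = c (exist _ k h).
Proof. exact: (merge_off i c (exist _ k h)). Qed.

Lemma set_idx_n (N : nat) (I : 'I_N -> nat) n J (jj : idx (upd I n J)) (i : 'I_(I n)) :
  (set_idx jj i n : nat) = i.
Proof. by rewrite /set_idx /mk_idx ffunE /= eqxx. Qed.

Lemma set_idx_off (N : nat) (I : 'I_N -> nat) n J (jj : idx (upd I n J)) (i : 'I_(I n)) k :
  k != n -> (set_idx jj i k : nat) = jj k.
Proof. by move=> h; rewrite /set_idx /mk_idx ffunE /= (negbTE h). Qed.

Lemma ord_upd_n (N : nat) (I : 'I_N -> nat) n J (b : 'I_(upd I n J n)) : (val b < J)%N.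
Proof. by have := ltn_ord b; rewrite [in X in (_ < X)%N -> _]upd_n. Qed.

Lemma ord_upd_off (N : nat) (I : 'I_N -> nat) n J k (b : 'I_(upd I n J k)) :
  k != n -> (val b < I k)%N.
Proof.
move=> h; have e : upd I n J k = I k by rewrite /upd (negbTE h).
by rewrite -[X in (_ < X)%N]e ltn_ord.
Qed.

Lemma ord_to_upd (N : nat) (I : 'I_N -> nat) n J k (b : 'I_(I k)) :
  k != n -> (val b < upd I n J k)%N.
Proof. by move=> h; rewrite /upd ifN //; exact: ltn_ord. Qed.

Lemma g2P (N : nat) (I : 'I_N -> nat) n J k (x : 'I_(I n)) (b : 'I_(upd I n J k)) :
  ((if k == n then val x else val b) < I k)%N.
Proof. by case: eqP => [->|h]; [exact: ltn_ord | apply: ord_upd_off; apply/eqP]. Qed.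

Lemma g3P (N : nat) (I : 'I_N -> nat) n J k (x : 'I_J) (b : 'I_(I k)) :
  ((if k == n then val x else val b) < upd I n J k)%N.
Proof. by case: eqP => [->|h]; [rewrite upd_n ltn_ord | apply: ord_to_upd; apply/eqP]. Qed.

Definition splitc (N : nat) (I : 'I_N -> nat) m (ii : idx I) : cols I m :=
  [ffun k => ii (val k)].

Lemma merge_split (N : nat) (I : 'I_N -> nat) m (ii : idx I) :
  merge (ii m) (splitc m ii) = ii.
Proof.
apply: idx_eq => k; case: (boolP (k == m)) => [/eqP ->|h]; first by rewrite merge_n.
by rewrite (merge_offk _ _ h) ffunE.
Qed.

Lemma unfoldE (K : realType) (N : nat) (I : 'I_N -> nat) (X : tensor K I) m i c :
  unfold X m i c = X (merge i (enum_val c)).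
Proof. by rewrite mxE. Qed.

Lemma Yval (K : realType) (N : nat) (I : 'I_N -> nat) (X : tensor K I) n R
  (j : 'I_R -> 'I_(I n)) jj :
  mode_prod X (\matrix_(s, t) (t == j s)%:R) jj = X (set_idx jj (j (modeJ jj))).
Proof.
rewrite /mode_prod ffunE (bigD1 (j (modeJ jj))) //= big1 => [|i /negbTE ni].
  by rewrite mxE eqxx mulr1 addr0.
by rewrite mxE ni mulr0.
Qed.

Lemma Ykey (K : realType) (N : nat) (I : 'I_N -> nat) (X : tensor K I) n R
  (j : 'I_R -> 'I_(I n)) (jj : idx (upd I n R)) (ii : idx I) (s : 'I_R) :
  (s : nat) = jj n -> (ii n : nat) = j s -> (forall k, k != n -> (ii k : nat) = jj k) ->
  mode_prod X (\matrix_(s, t) (t == j s)%:R) jj = X ii.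
Proof.
move=> hs hn hk; rewrite Yval; congr (X _); apply: idx_eq => k.
case: (boolP (k == n)) => [/eqP ->|h]; last by rewrite set_idx_off // hk.
rewrite set_idx_n hn; congr (nat_of_ord (j _)); apply: val_inj.
by rewrite /= hs.
Qed.
Lemma rank_le_comb (K : fieldType) (p p' a b k : nat) (M : 'M[K]_(p,a)) (M' : 'M[K]_(p',b))
  (σ : 'I_p' -> 'I_p) (φ : 'I_b -> 'I_k -> 'I_a) (w : 'I_b -> 'I_k -> K) :
  (forall r c', M' r c' = \sum_(i<k) M (σ r) (φ c' i) * w c' i) -> (\rank M' <= \rank M)%N.
Proof.
move=> H.
pose W := \matrix_(c, c') \sum_(i<k) (c == φ c' i)%:R * w c' i : 'M[K]_(a,b).
have -> : M' = rowsub σ (M *m W).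
  apply/matrixP => r c'; rewrite H !mxE.
  under [RHS]eq_bigr do rewrite mxE big_distrr.
  rewrite exchange_big /=; apply: eq_bigr => i _.
  rewrite (bigD1 (φ c' i)) //= big1 => [|c /negbTE ->]; last by rewrite mul0r mulr0.
  by rewrite eqxx mul1r addr0.
apply: leq_trans (mxrankM_maxl M W).
exact/mxrankS/rowsub_sub.
Qed.

Theorem lemma3p4 (K : realType) (N : nat) (I : 'I_N -> nat) (X : tensor K I)
  (n : 'I_N) (j : 'I_(\rank (unfold X n)) -> 'I_(I n)) :
  X != 0 ->
  (forall s t : 'I_(\rank (unfold X n)), (s < t)%N -> (j s < j t)%N) ->
  row_free (rowsub j (unfold X n)) ->
  let A : 'M[K]_(\rank (unfold X n), I n) := \matrix_(s, t) (t == j s)%:R in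
  let Y := mode_prod X A in
  subtensor Y X /\
  forall m : 'I_N, \rank (unfold Y m) = \rank (unfold X m).
Proof.
move=> X0 jmono jfree A Y.
move: j jmono jfree @A @Y; set R := \rank (unfold X n) => j jmono jfree A Y.
have Ipos : forall k, (0 < I k)%N.
  move=> k; rewrite lt0n; apply/negP => /eqP Ik; move/negP: X0; apply; apply/eqP.
  by apply/ffunP => ii; have := ltn_ord (ii k); move: (nat_of_ord (ii k)); rewrite Ik.
have Rpos : (0 < R)%N.
  rewrite lt0n mxrank_eq0; apply/negP => /eqP U0; move/negP: X0; apply; apply/eqP.
  apply/ffunP => ii; rewrite -(merge_split n ii) ffunE.
  by rewrite -[splitc n ii]enum_rankK -unfoldE U0 mxE.
have RI : (R <= I n)%N by apply: rank_leq_row.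
split.
  split.
    move=> k; rewrite /upd; case: eqP => [->|_]; first by rewrite Rpos RI.
    by rewrite Ipos leqnn.
  pose vf (k : 'I_N) (a : nat) : nat :=
    if k == n then (if (insub a : option 'I_R) is Some s then val (j s) else 0%N) else a.
  have fP : forall k (a : 'I_(upd I n R k)), (vf k a < I k)%N.
    move=> k a; rewrite /vf; case: eqP => [ekn|nekn].
      subst k; case: insubP => [s _ _|]; first exact: ltn_ord.
      by rewrite Ipos.
    by apply: ord_upd_off; apply/eqP.
  exists (fun k a => Ordinal (fP k a)); split.
    move=> k a b ab /=; rewrite /vf; case: eqP => // ekn; subst k.
    case: insubP => [s _ sa|]; last by rewrite (ltn_trans ab (ord_upd_n b)).
    case: insubP => [t _ tb|]; last by rewrite ord_upd_n.
    by apply: jmono; rewrite sa tb.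
  move=> jj; rewrite /Y /A; apply: (@Ykey _ _ _ X _ _ j jj _ (modeJ jj)) => //.
    rewrite /mk_idx ffunE /= /vf eqxx; case: insubP => [s _ sv|]; last by rewrite ord_upd_n.
    by congr (nat_of_ord (j _)); apply: val_inj; rewrite /= sv.
  by move=> k kn; rewrite /mk_idx ffunE /= /vf (negbTE kn).
move=> m; rewrite /Y /A.
have rM : \rank (rowsub j (unfold X n)) = R by apply/eqP: jfree.
case: (m =P n) => [->|/eqP nemn].
  pose g (c : cols (upd I n R) n) : cols I n :=
    [ffun k => Ordinal (ord_upd_off (c k) (valP k))].
  pose h (c : cols I n) : cols (upd I n R) n :=
    [ffun k => Ordinal (ord_to_upd R (c k) (valP k))].
  transitivity (\rank (rowsub j (unfold X n))); last exact: rM.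
  apply/eqP; rewrite eqn_leq; apply/andP; split.
    apply: (@rank_le_comb _ _ _ _ _ 1 (rowsub j (unfold X n)) _
      (cast_ord (upd_n I n R)) (fun c' _ => enum_rank (g (enum_val c'))) (fun _ _ => 1)).
    move=> r c'; rewrite big_ord1 mulr1 !mxE enum_rankK.
    apply: (@Ykey _ _ _ X _ _ j _ _ (cast_ord (upd_n I n R) r)).
    - by rewrite merge_n.
    - by rewrite merge_n.
    - by move=> k kn; rewrite !(merge_offk _ _ kn) ffunE.
  apply: (@rank_le_comb _ _ _ _ _ 1 _ (rowsub j (unfold X n))
    (cast_ord (esym (upd_n I n R))) (fun c _ => enum_rank (h (enum_val c))) (fun _ _ => 1)).
  move=> r c; rewrite big_ord1 mulr1 !mxE enum_rankK; symmetry.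
  apply: (@Ykey _ _ _ X _ _ j _ _ r).
  - by rewrite merge_n.
  - by rewrite merge_n.
  - by move=> k kn; rewrite !(merge_offk _ _ kn) ffunE.
have ne : n != m by rewrite eq_sym.
pose kn : {k : 'I_N | k != m} := exist _ n ne.
have um : upd I n R m = I m by rewrite /upd (negbTE nemn).
apply/eqP; rewrite eqn_leq; apply/andP; split.
  pose g2 (c : cols (upd I n R) m) : cols I m :=
    [ffun k : {k : 'I_N | k != m} => Ordinal (@g2P _ I n R (val k) (j (cast_ord (upd_n I n R) (c kn))) (c k))].
  apply: (@rank_le_comb _ _ _ _ _ 1 (unfold X m) _
    (cast_ord um) (fun c' _ => enum_rank (g2 (enum_val c'))) (fun _ _ => 1)).
  move=> r c'; rewrite big_ord1 mulr1 !mxE enum_rankK.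
  apply: (@Ykey _ _ _ X _ _ j _ _ (cast_ord (upd_n I n R) (enum_val c' kn))).
  - by rewrite (merge_offk _ _ ne).
  - by rewrite (merge_offk _ _ ne) ffunE /= eqxx.
  - move=> k kk; case: (boolP (k == m)) => [/eqP ->|km]; first by rewrite !merge_n.
    by rewrite !(merge_offk _ _ km) ffunE /= (negbTE kk).
have sub : (unfold X n <= rowsub j (unfold X n))%MS.
  by case: (mxrank_leqif_sup (rowsub_sub j (unfold X n))) => _ <-; rewrite rM.
case/submxP: sub => D /matrixP hD.
have Xexp : forall i (c : cols I n), X (merge i c) = \sum_s D i s * X (merge (j s) c).
  move=> i c; have := hD i (enum_rank c); rewrite /= !mxE enum_rankK => ->.
  by apply: eq_bigr => s _; rewrite !mxE enum_rankK.
pose g3 (c : cols I m) (s : 'I_R) : cols (upd I n R) m :=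
  [ffun k : {k : 'I_N | k != m} => Ordinal (@g3P _ I n R (val k) s (c k))].
apply: (@rank_le_comb _ _ _ _ _ R _ (unfold X m)
  (cast_ord (esym um)) (fun c s => enum_rank (g3 (enum_val c) s))
  (fun c s => D (enum_val c kn) s)).
move=> r c; rewrite mxE; set cc := enum_val c.
rewrite -(merge_split n (merge r cc)) Xexp.
apply: eq_bigr => s _; rewrite !mxE enum_rankK mulrC; congr (_ * _).
  symmetry; apply: (@Ykey _ _ _ X _ _ j _ _ s).
  - by rewrite (merge_offk _ _ ne) ffunE /= eqxx.
  - by rewrite merge_n.
  - move=> k kk; rewrite (merge_offk _ _ kk) ffunE /=.
    case: (boolP (k == m)) => [/eqP ->|km]; first by rewrite !merge_n.
    by rewrite !(merge_offk _ _ km) ffunE /= (negbTE kk).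
by congr (D _ s); apply: val_inj; rewrite /= (merge_offk _ _ ne).
Qed.
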